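(* For every integer $n\ge1$ there exists an infinite word $w_n$ over an alphabet $\Sigma_n$ of $2n$ letters with $\mathrm{ACE}(w_n) = 1$ such that $\mathrm{ACE}_{\mathcal{I}}(w_n)\ge n$, where $\mathrm{ACE}_{\mathcal{I}}$ is taken with $\Sigma=\Sigma_n$ and $\Gamma$ any finite alphabet with at least two letters.
   Context: $\mathrm{Fact}_n(w)$ is the set of length-$n$ factors of $w$. For a nonempty word $v$ and integer $p\ge0$, $v^{p/|v|}$ is the prefix of length $p$ of $vvv\cdots$. For a nonempty finite word $u$, $\mathrm{E}(u) = \sup\{ r \in \mathbb{Q} : u = v^r \text{ for some nonempty } v\}$. For an infinite word $w$, $\mathrm{ACE}(w) = \limsup_{m\to\infty}\sup\{\mathrm{E}(u) : u\in\mathrm{Fact}_m(w)\}$. $\mathcal{I}$ is the set of injective morphisms $\Sigma^*\to\Gamma^*$ and $\mathrm{ACE}_{\mathcal{I}}(w) = \sup\{\mathrm{ACE}(h(w)) : h\in\mathcal{I}\}$. *)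

(* Defs.v *)
From HB Require Import structures.
From mathcomp Require Import all_boot all_order all_algebra.
From mathcomp Require Import boolp classical_sets reals ereal topology normedtype sequences.
From mathcomp Require Import Rstruct.
Set Implicit Arguments. Unset Strict Implicit. Unset Printing Implicit Defensive.
Import Order.TTheory GRing.Theory Num.Theory.
Local Open Scope classical_set_scope.
Local Open Scope ring_scope.

Notation R := Rdefinitions.R.

Definition iword (A : Type) := nat -> A.

Definition factor_at (A : Type) (w : iword A) (i m : nat) : seq A :=
  mkseq (fun j => w (i + j)) m.

Definition Fact (A : Type) (m : nat) (w : iword A) : set (seq A) :=
  [set u | exists i, u = factor_at w i m].

(* v^{p/|v|} : the prefix of length p of v v v ... (v nonempty) *)
Definition fpow (A : Type) (v : seq A) (p : nat) : seq A :=
  take p (flatten (nseq p v)).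

Definition Exp (A : eqType) (u : seq A) : \bar R :=
  ereal_sup [set (r%:E) | r in
     [set r : R | exists (v : seq A) (p : nat),
        size v != 0%N /\ r = (p%:R / (size v)%:R) /\ u = fpow v p]].

Definition ACE (A : eqType) (w : iword A) : \bar R :=
  limn_esup (fun m : nat => ereal_sup [set Exp u | u in Fact m w]).

Definition morph (S G : Type) (h : S -> seq G) (s : seq S) : seq G :=
  flatten (map h s).

Definition inj_morph (S G : Type) (h : S -> seq G) : Prop :=
  injective (morph h).

(* u is the infinite word h(w): every image h(w_0 ... w_{k-1}) is a prefix of u *)
Definition morph_image (S G : Type) (h : S -> seq G) (w : iword S) (u : iword G) : Prop :=
  forall k : nat, let p := morph h (mkseq w k) in mkseq u (size p) = p.

Definition ACE_I (S : Type) (G : eqType) (w : iword S) : \bar R :=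
  ereal_sup [set ACE u | u in
     [set u : iword G | exists h : S -> seq G, inj_morph h /\ morph_image h w u]].

(* Main.v *)
Require Import Defs.
From mathcomp Require Import all_boot all_order all_algebra.
From mathcomp Require Import boolp classical_sets reals ereal Rstruct.
From mathcomp Require Import topology normedtype sequences.
From mathcomp Require Import zify.

Module Comb.
Set Implicit Arguments. Unset Strict Implicit. Unset Printing Implicit Defensive.

Section Constr.
Variable n : nat.
Hypothesis n_gt0 : 0 < n.

Definition sl := n.*2.+1.
Definition r (t : nat) := n * (t + 4) + 1.
Definition coll (k : nat) := if k < n then 0 else k.
Definition ct t u := coll (u %% r t).
Fixpoint dfu (F t u : nat) : bool :=
  if F is F'.+1 then
    (if u %% r t < n then dfu F' t.+1 (u %/ r t)
     else odd (ct t.+2 (u %/ r t %/ r t.+1) %/ 2 ^ (u %% r t - n)))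
  else false.
Definition dd t u := dfu u.+1 t u.
Definition letter t u := (ct t u, ct t.+1 (u %/ r t), dd t u).
Definition code0 v := (ct 0 v + r 0 * (ct 1 (v %/ r 0) + r 1 * dd 0 v)).
Definition Dn := (r 0 * r 1 * n).*2.+1.
Definition xb v j := (j == code0 v).
Definition L1 := 3 * n + Dn * sl + n.
Definition Vo (x : nat -> bool) (o : nat) : bool :=
  if o < 3 * n then false else if 3 * n + Dn * sl <= o then true
  else ((o - 3 * n) %% sl < n + x ((o - 3 * n) %/ sl)).
Definition V i := Vo (xb (i %/ L1)) (i %% L1).
Fixpoint L t := if t is t'.+1 then r t' * L t' else L1.

Lemma r_gt t : n.+1 < r t.
Proof. rewrite /r; nia. Qed.
Lemma r_gt1 t : 1 < r t.
Proof. have := r_gt t; lia. Qed.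
Lemma r_mono t t' : t <= t' -> r t <= r t'.
Proof. rewrite /r => h; nia. Qed.

Lemma dfu_0 F t : dfu F t 0 = false.
Proof.
elim: F t => [|F IH] t //=. by rewrite mod0n n_gt0 div0n IH.
Qed.

Lemma dfu_indep F F' t u : u < F -> u < F' -> dfu F t u = dfu F' t u.
Proof.
elim: F F' t u => [|F IH] [|F'] t u //= hu hu'.
case: (ltnP (u %% r t) n) => h //.
have [->|upos] := posnP u; first by rewrite div0n !dfu_0.
have hd : u %/ r t < u by rewrite ltn_Pdiv // ?r_gt1.
apply: IH; lia.
Qed.

Lemma dfu_enough F t u : u < F -> dfu F t u = dd t u.
Proof. by move=> h; apply: dfu_indep. Qed.

Lemma dd_step t P k : k < r t ->
  dd t (P * r t + k) = if k < n then dd t.+1 P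
     else odd (ct t.+2 (P %/ r t.+1) %/ 2 ^ (k - n)).
Proof.
move=> hk.
have rp : 0 < r t by have := r_gt1 t; lia.
have emod : (P * r t + k) %% r t = k by rewrite modnMDl modn_small.
have ediv : (P * r t + k) %/ r t = P by rewrite divnMDl // divn_small // addn0.
rewrite /dd /=.
rewrite emod ediv.
case: ifP => // _.
have [->|Ppos] := posnP P; first by rewrite mod0n n_gt0 !dfu_0.
rewrite dfu_enough //.
have : P.+1 <= P * r t by rewrite -[P.+1]muln1 ltn_pmul2l ?r_gt1.
lia.
Qed.

Lemma letter_step t P k : k < r t ->
  letter t (P * r t + k) = (coll k, ct t.+1 P,
     if k < n then dd t.+1 P else odd (ct t.+2 (P %/ r t.+1) %/ 2 ^ (k - n))).
Proof.
move=> hk.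
have rp : 0 < r t by have := r_gt1 t; lia.
rewrite /letter dd_step // /ct modnMDl modn_small // divnMDl // divn_small // addn0.
done.
Qed.

Lemma coll_lt k m : k < m -> coll k < m.
Proof. rewrite /coll; case: ifP => _; lia. Qed.
Lemma ct_lt t u : ct t u < r t.
Proof. by apply: coll_lt; rewrite ltn_mod; have := r_gt1 t; lia. Qed.

Lemma two_pow a : 2 * a <= 2 ^ a.
Proof.
elim: a => [|a IH] //.
case: a IH => [|a] IH //.
rewrite expnS. have : 1 <= 2 ^ a.+1 by rewrite expn_gt0.
lia.
Qed.

Lemma cap t : r t.+2 < 2 ^ (r t - n).
Proof.
apply: (leq_trans _ (two_pow _)). rewrite /r. nia.
Qed.

Lemma bits_inj a x y : x < 2 ^ a -> y < 2 ^ a ->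
  (forall j, j < a -> odd (x %/ 2 ^ j) = odd (y %/ 2 ^ j)) -> x = y.
Proof.
elim: a x y => [|a IH] x y.
  by rewrite expn0; case: x; case: y.
move=> hx hy hj.
rewrite -(odd_double_half x) -(odd_double_half y).
have h0 := hj 0 (ltn0Sn a). rewrite !expn0 !divn1 in h0.
rewrite h0; congr (_ + _); congr (_.*2).
apply: IH.
- rewrite -divn2 ltn_divLR // -expnSr; lia.
- rewrite -divn2 ltn_divLR // -expnSr; lia.
move=> j hj'. have := hj j.+1 hj'. by rewrite expnSr (mulnC (2 ^ j)) !divnMA !divn2.
Qed.

Lemma mkseq_mul (T : Type) (f : nat -> T) a b :
  mkseq f (a * b) = flatten (mkseq (fun k => mkseq (fun j => f (k * b + j)) b) a).
Proof.
elim: a => [|a IH] //.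
rewrite mulSn addnC /mkseq iotaD map_cat -/(mkseq f (a * b)) IH.
rewrite -addn1 iotaD map_cat flatten_cat /= cats0 add0n.
congr (_ ++ _).
rewrite -{1}[a * b]addn0 iotaDl -map_comp. apply: eq_map => j /=. by rewrite addnC.
Qed.

Definition blk t u := mkseq (fun j => V (u * L t + j)) (L t).

Lemma size_blk t u : size (blk t u) = L t.
Proof. by rewrite size_mkseq. Qed.

Lemma blk_step t P : blk t.+1 P = flatten (mkseq (fun k => blk t (P * r t + k)) (r t)).
Proof.
rewrite /blk /= mkseq_mul. congr flatten. apply: eq_map => k.
apply: eq_map => j /=. congr V. nia.
Qed.

Lemma L1_pos : 0 < L1.
Proof. rewrite /L1; lia. Qed.

Lemma blk0 v : blk 0 v = mkseq (Vo (xb v)) L1.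
Proof.
rewrite /blk /=. apply/eq_in_map => j; rewrite mem_iota add0n => /andP[_ hj].
rewrite /V. have hp := L1_pos.
by rewrite divnMDl // divn_small // addn0 modnMDl modn_small.
Qed.
Lemma sl_gt : n.+1 < sl.
Proof. rewrite /sl; lia. Qed.

Lemma slE : sl = n * 2 + 1.
Proof. by rewrite /sl -muln2 addn1. Qed.

Lemma Vo_mark x o : o < 3 * n -> Vo x o = false.
Proof. by rewrite /Vo => ->. Qed.

Lemma Vo_tail x o : 3 * n + Dn * sl <= o -> Vo x o = true.
Proof. rewrite /Vo => h; case: ifP => h2 //; [lia | by rewrite h]. Qed.

Lemma Vo_seg x j e : j < Dn -> e < sl -> Vo x (3 * n + j * sl + e) = (e < n + x j).
Proof.
move=> hj he. rewrite /Vo.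
have h1 : 3 * n + j * sl + e < 3 * n + Dn * sl.
  have : (j.+1) * sl <= Dn * sl by rewrite leq_mul2r hj orbT.
  rewrite mulSn. lia.
have h2 : (3 * n + j * sl + e) - 3 * n = j * sl + e by lia.
rewrite ifF; last lia. rewrite ifF; last lia.
rewrite h2 modnMDl modn_small // divnMDl; last lia.
by rewrite divn_small // addn0.
Qed.

Definition fcode (l : nat * nat * bool) := l.1.1 + r 0 * (l.1.2 + r 1 * l.2).

Lemma code0E v : code0 v = fcode (letter 0 v).
Proof. by []. Qed.

Lemma code0_lt v : code0 v < Dn.
Proof.
rewrite /code0 /Dn. have h1 := ct_lt 0 v. have h2 := ct_lt 1 (v %/ r 0).
have h3 : (dd 0 v : nat) <= 1 by case: (dd 0 v).
have h4 : ct 1 (v %/ r 0) + r 1 * dd 0 v < r 1 * 2 by nia.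
have h5 : ct 0 v + r 0 * (ct 1 (v %/ r 0) + r 1 * dd 0 v) < r 0 * (r 1 * 2) by nia.
nia.
Qed.

Lemma fcode_inj a b c a' b' c' : a < r 0 -> a' < r 0 -> b < r 1 -> b' < r 1 ->
  fcode (a, b, c) = fcode (a', b', c') -> (a, b, c) = (a', b', c').
Proof.
rewrite /fcode /= => ha ha' hb hb' e.
have r0p : 0 < r 0 by have := r_gt1 0; lia.
have r1p : 0 < r 1 by have := r_gt1 1; lia.
have ea : a = a'.
  by move: (congr1 (modn^~ (r 0)) e); rewrite /= !(addnC _ (r 0 * _)) !(mulnC (r 0)) !modnMDl !modn_small.
subst a'. move/eqP: e; rewrite eqn_add2l eqn_mul2l (gtn_eqF r0p) /= => /eqP e.
have eb : b = b'.
  by move: (congr1 (modn^~ (r 1)) e); rewrite /= !(addnC _ (r 1 * _)) !(mulnC (r 1)) !modnMDl !modn_small.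
subst b'. move/eqP: e; rewrite eqn_add2l eqn_mul2l (gtn_eqF r1p) /=.
by case: c; case: c'.
Qed.

Lemma letter_blk0 v v' : blk 0 v = blk 0 v' -> letter 0 v = letter 0 v'.
Proof.
rewrite !blk0 => e.
set o := 3 * n + code0 v * sl + n.
have ho : o < L1.
  have h := code0_lt v.
  have : (code0 v).+1 * sl <= Dn * sl by rewrite leq_mul2r h orbT.
  rewrite /o /L1 mulSn. have := sl_gt. lia.
have := congr1 (fun s => nth false s o) e.
rewrite /= !nth_mkseq // /o !Vo_seg ?code0_lt //; last by have := sl_gt; lia.
rewrite /xb eqxx /=.
case: eqP => [ec _|]; last by lia.
move: ec; rewrite !code0E /letter => ec.
exact: (fcode_inj (ct_lt 0 v) (ct_lt 0 v') (ct_lt 1 _) (ct_lt 1 _) ec).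
by have := sl_gt; lia.
Qed.
Lemma flatten_pieces (T : eqType) (f g : nat -> seq T) a b :
  (forall k, size (f k) = b) -> (forall k, size (g k) = b) ->
  flatten (mkseq f a) = flatten (mkseq g a) -> forall k, k < a -> f k = g k.
Proof.
move=> sf sg.
elim: a => [|a IH] // e k hk.
move: e; rewrite !mkseqS -!cats1 !flatten_cat /= !cats0 => /eqP.
rewrite eqseq_cat; last first.
  rewrite !size_flatten. congr sumn. rewrite /shape -!map_comp. apply: eq_map => i /=. by rewrite sf sg.
case/andP => /eqP e1 /eqP e2.
move: hk; rewrite ltnS leq_eqVlt => /orP[/eqP -> //| hk].
exact: IH.
Qed.

Lemma letter_blk t u u' : blk t u = blk t u' -> letter t u = letter t u'.
Proof.
elim: t u u' => [|t IH] u u'; first exact: letter_blk0.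
rewrite !blk_step => e.
have hk : forall k, k < r t -> letter t (u * r t + k) = letter t (u' * r t + k).
  move=> k hk; apply: IH.
  exact: (flatten_pieces (f := fun k => blk t (u * r t + k))
   (g := fun k => blk t (u' * r t + k)) (b := L t) (fun i => size_blk t _) (fun i => size_blk t _) e hk).
have h0 : letter t (u * r t + 0) = letter t (u' * r t + 0) by apply: hk; have := r_gt1 t; lia.
rewrite !letter_step ?n_gt0 in h0; last by have := r_gt t; lia.
case: h0 => e1 e2.
rewrite /letter e1 e2; congr (_, _, _).
apply: (bits_inj (a := r t - n)).
- by apply: (ltn_trans (ct_lt _ _)); apply: cap.
- by apply: (ltn_trans (ct_lt _ _)); apply: cap.
move=> j hj.
have hj' : n + j < r t by lia.
have h := hk (n + j) hj'.
have hnj : (n + j < n) = false by lia.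
rewrite !letter_step // hnj in h.
rewrite (_ : n + j - n = j) in h; last lia.
by case: h.
by have := r_gt1 t; lia.
Qed.

Lemma blk_letter t u u' : letter t u = letter t u' -> blk t u = blk t u'.
Proof.
elim: t u u' => [|t IH] u u'.
  move=> e; rewrite !blk0 /xb !code0E e. done.
move=> e. rewrite !blk_step. congr flatten. apply/eq_in_map => k.
rewrite mem_iota add0n => /andP[_ hk].
apply: IH. rewrite !letter_step //.
move: e; rewrite /letter; case=> -> -> ->. done.
Qed.
Lemma VE v o : o < L1 -> V (v * L1 + o) = Vo (xb v) o.
Proof.
move=> ho; have hp := L1_pos.
by rewrite /V divnMDl // divn_small // addn0 modnMDl modn_small.
Qed.

Lemma Vdec i : i = i %/ L1 * L1 + i %% L1.
Proof. exact: divn_eq. Qed.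

Lemma seg_decomp o : 3 * n <= o -> o < 3 * n + Dn * sl ->
  exists J e, [/\ J < Dn, e < sl & o = 3 * n + J * sl + e].
Proof.
move=> h1 h2. have slp : 0 < sl by rewrite /sl.
exists ((o - 3 * n) %/ sl), ((o - 3 * n) %% sl); split.
- by rewrite ltn_divLR //; lia.
- by rewrite ltn_mod.
- have := divn_eq (o - 3 * n) sl. lia.
Qed.

Lemma L1_gt : 3 * n + Dn * sl + n = L1.
Proof. by []. Qed.

Lemma marker a : (forall j, j < 3 * n -> V (a + j) = false) -> L1 %| a.
Proof.
move=> hm.
have hp := L1_pos.
set v := a %/ L1; set o := a %% L1.
have ea : a = v * L1 + o by exact: Vdec.
have ho : o < L1 by rewrite ltn_mod.
have hv : forall j, o + j < L1 -> V (a + j) = Vo (xb v) (o + j).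
  by move=> j hj; rewrite ea -addnA VE.
have hDn : 0 < Dn by rewrite /Dn.
have slp : n.+1 < sl := sl_gt.
have [o0|opos] := posnP o; first by rewrite /dvdn -/o o0.
exfalso.
case: (leqP o (3 * n)) => h1.
  have := hm (3 * n - o) ltac:(lia).
  rewrite hv; last by rewrite /L1; lia.
  rewrite (_ : o + (3 * n - o) = 3 * n + 0 * sl + 0); last lia.
  by rewrite Vo_seg //; case: (xb v 0) => /=; lia.
case: (ltnP o (3 * n + Dn * sl)) => h2; last first.
  by have := hm 0 ltac:(lia); rewrite hv addn0 ?Vo_tail.
have [J [e [hJ he eo]]] := seg_decomp (ltnW h1) h2.
case: (ltnP e (n + xb v J)) => h3.
  by have := hm 0 ltac:(lia); rewrite hv addn0 // eo Vo_seg // h3.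
have hne : n <= e by move: h3; case: (xb v J) => /=; lia.
have hj : sl - e < 3 * n by rewrite slE; lia.
have := hm (sl - e) hj.
case: (ltnP J.+1 Dn) => h4.
  rewrite hv; last first.
    have : J.+2 * sl <= Dn * sl by rewrite leq_mul2r h4 orbT.
    rewrite /L1 mulSn. lia.
  rewrite (_ : o + (sl - e) = 3 * n + J.+1 * sl + 0); last by rewrite eo mulSn; lia.
  by rewrite Vo_seg //; case: (xb v _) => /=; lia.
have eJ : J.+1 = Dn by lia.
rewrite hv; last by rewrite /L1 -eJ mulSn; lia.
by rewrite Vo_tail // eo -eJ mulSn; lia.
Qed.
Lemma runs i : V i != V i.+1 -> forall j, j < n -> V (i.+1 + j) = V i.+1.
Proof.
move=> hc j hj.
have hp := L1_pos.
have hDn : 0 < Dn by rewrite /Dn.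
have slp : n.+1 < sl := sl_gt.
have hsl := slE.
set v := i.+1 %/ L1; set o := i.+1 %% L1.
have ea : i.+1 = v * L1 + o by exact: Vdec.
have ho : o < L1 by rewrite ltn_mod.
have hv : forall k, o + k < L1 -> V (i.+1 + k) = Vo (xb v) (o + k).
  by move=> k hk; rewrite ea -addnA VE.
have hv0 : V i.+1 = Vo (xb v) o by rewrite -[i.+1]addn0 hv ?addn0.
clearbody v o.
have hL1 : L1 = 3 * n + Dn * sl + n by [].
have [o0|opos] := posnP o.
  rewrite hv0 hv o0 ?add0n; last lia.
  by rewrite !Vo_mark //; lia.
have hvi : V i = Vo (xb v) (o - 1).
  have : i = v * L1 + (o - 1) by lia.
  by move=> ->; rewrite VE //; lia.
move: hc; rewrite hvi hv0 => hc.
case: (ltnP o (3 * n)) => h1.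
  by move: hc; rewrite !Vo_mark //; lia.
case: (ltnP o (3 * n + Dn * sl)) => h2; last first.
  case: (ltnP (3 * n + Dn * sl) o) => h3.
    by move: hc; rewrite !Vo_tail //; lia.
  have eo : o = 3 * n + Dn * sl by lia.
  rewrite hv; last by rewrite /L1; lia.
  by rewrite !Vo_tail //; lia.
have [J [e [hJ he eo]]] := seg_decomp h1 h2.
have hvs : forall k, e + k < sl -> V (i.+1 + k) = (e + k < n + xb v J).
  move=> k hk. rewrite hv; last first.
    have : J.+1 * sl <= Dn * sl by rewrite leq_mul2r hJ orbT.
    rewrite /L1 mulSn. lia.
  by rewrite eo -addnA Vo_seg.
have hvs0 : Vo (xb v) o = (e < n + xb v J) by rewrite eo Vo_seg.
rewrite hvs0.
have [e0|epos] := posnP e.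
  rewrite hvs; last lia.
  rewrite e0; case: (xb v J) => /=; lia.
move: hc. rewrite hvs0 eo (_ : (3 * n + J * sl + e) - 1 = 3 * n + J * sl + (e - 1)); last lia.
rewrite Vo_seg //; last lia.
move=> hc.
have ee : e = n + xb v J by move: hc; case: (xb v J) => /=; case: ltnP; case: ltnP; lia.
rewrite hvs; last by move: ee; case: (xb v J) => /=; lia.
rewrite ee; case: (xb v J) => /=; lia.
Qed.
Lemma L_pos t : 0 < L t.
Proof. elim: t => [|t IH] /=; first exact: L1_pos. by rewrite muln_gt0 IH; have := r_gt1 t; lia. Qed.

Lemma L_le t : L t <= L t.+1.
Proof. rewrite /= leq_pmull //; have := r_gt1 t; lia. Qed.

Lemma L_lt t : L t < L t.+1.
Proof. rewrite /= -[X in X < _]mul1n ltn_pmul2r ?L_pos //; exact: r_gt1. Qed.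

Lemma L_ge t : t < L t.
Proof.
elim: t => [|t IH]; first exact: L1_pos.
by apply: leq_ltn_trans (L_lt t).
Qed.

Lemma L_mono t t' : t <= t' -> L t <= L t'.
Proof.
move=> h; rewrite -(subnKC h); elim: (t' - t) => [|k IH]; first by rewrite addn0.
by rewrite addnS (leq_trans IH) // L_le.
Qed.

Lemma L_1n t : exists K, L t = K * n + 1.
Proof.
elim: t => [|t [K IH]] /=.
  exists (4 + (r 0 * r 1 * 2 * (n * 2 + 1) + 2)).
  rewrite /L1 /Dn slE -muln2. nia.
exists ((t + 4) * (K * n + 1) + K). rewrite IH /r. nia.
Qed.

Lemma dvd_L t E : n %| E * L t -> n %| E.
Proof.
have [K ->] := L_1n t.
by rewrite mulnDr muln1 mulnA dvdn_addr // dvdn_mull.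
Qed.

Definition rep x p l := forall j, j < l -> V (x + j) = V (x + p + j).

Lemma ceil_facts x L0 : 0 < L0 -> x <= (x + L0 - 1) %/ L0 * L0 /\ (x + L0 - 1) %/ L0 * L0 < x + L0.
Proof.
move=> hL.
have e := divn_eq (x + L0 - 1) L0.
have hm := ltn_mod (x + L0 - 1) L0. rewrite hL in hm.
split; lia.
Qed.

Lemma blocks_eq t x p l U D j : rep x p l -> p = D * L t -> x <= U * L t ->
  (U + j).+1 * L t <= x + l -> blk t (U + j) = blk t (U + D + j).
Proof.
move=> hr hp hx hl.
apply/eq_in_map => i; rewrite mem_iota add0n => /andP[_ hi].
have := hr ((U + j) * L t + i - x) ltac:(nia).
rewrite (_ : x + ((U + j) * L t + i - x) = (U + j) * L t + i); last nia.
move=> ->. congr V. rewrite hp. nia.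
Qed.

Lemma noncopy U t : exists j, j <= n /\ n <= (U + j) %% r t.
Proof.
case: (leqP n (U %% r t)) => h.
  by exists 0; rewrite addn0.
exists (n - U %% r t); split; first lia.
have hr := r_gt t.
rewrite -modnDml (_ : U %% r t + (n - U %% r t) = n); last lia.
by rewrite modn_small //; lia.
Qed.

Lemma core t x p l : rep x p l -> (n + 2) * L t <= l -> L t %| p ->
  exists y, n <= y %% r t /\ letter t y = letter t (y + p %/ L t).
Proof.
move=> hr hl hd.
have hL := L_pos t.
have [c1 c2] := ceil_facts x hL.
set U := (x + L t - 1) %/ L t in c1 c2.
have [j [hj1 hj2]] := noncopy U t.
exists (U + j); split => //.
apply: letter_blk.
rewrite (addnC (U + j)) addnA (addnC _ U).
apply: (blocks_eq (x := x) (p := p) (l := l)) => //.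
  by rewrite divnK.
nia.
Qed.

Lemma coll_ge k k' : n <= k -> coll k = coll k' -> k = k'.
Proof.
rewrite /coll => h. rewrite ifF; last lia.
case: ifP => h2 e; lia.
Qed.

Lemma B t x p l : rep x p l -> (n + 2) * L t <= l -> L t %| p.
Proof.
elim: t x p l => [|t IH] x p l hr hl.
  have hL := L1_pos.
  have [c1 c2] := ceil_facts x hL.
  set U := (x + L1 - 1) %/ L1 in c1 c2.
  have h1 : L1 %| U * L1 + p.
    apply: marker => j hj.
    have h2 : 2 * L1 <= l by rewrite /= in hl; apply: leq_trans hl; rewrite leq_mul2r; lia.
    have h3 : 3 * n < L1 by rewrite /L1; lia.
    have := hr (U * L1 - x + j) ltac:(lia).
    rewrite (_ : x + (U * L1 - x + j) = U * L1 + j); last lia.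
    rewrite (_ : x + p + (U * L1 - x + j) = U * L1 + p + j); last lia.
    move=> <-. rewrite VE ?Vo_mark //. rewrite /L1; lia.
  by rewrite /= -(dvdn_addr _ (dvdn_mull U (dvdnn L1))).
have hLt : L t %| p.
  apply: (IH x p l hr). apply: leq_trans hl. by rewrite leq_mul2l L_le orbT.
have hl' : (n + 2) * L t <= l by apply: leq_trans hl; rewrite leq_mul2l L_le orbT.
have [y [hy e]] := core hr hl' hLt.
move: e; rewrite /letter => -[e1 _ _].
have e2 := coll_ge hy e1.
have hrD : r t %| p %/ L t.
  have : (y + p %/ L t == y + 0 %[mod r t]) by rewrite addn0 -e2.
  by rewrite eqn_modDl mod0n /dvdn => /eqP <-.
by rewrite /= -(divnK hLt) dvdn_pmul2r ?L_pos.
Qed.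
Lemma coll0 k : coll k = 0 -> k < n.
Proof. rewrite /coll; case: ifP => //; lia. Qed.

Lemma Main t x p l : rep x p l -> (n + 2) * L t <= l -> 0 < p -> n %| p ->
  (r t.+1 - n) * L t.+1 <= p.
Proof.
move=> hr hl hp hn.
have hLt := B hr hl.
have [y [hy e]] := core hr hl hLt.
move: e; rewrite /letter => -[e1 e2 _].
have e3 := coll_ge hy e1.
have hrD : r t %| p %/ L t.
  have : (y + p %/ L t == y + 0 %[mod r t]) by rewrite addn0 -e3.
  by rewrite eqn_modDl mod0n /dvdn => /eqP <-.
set E := p %/ L t %/ r t.
have hrt : 0 < r t by have := r_gt1 t; lia.
have eD : p %/ L t = E * r t by rewrite divnK.
have ep : p = E * L t.+1 by rewrite /= mulnA -eD divnK.
have Epos : 0 < E by move: hp; rewrite ep; case: (E) => //.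
have hnE : n %| E by apply: (dvd_L (t := t.+1)); rewrite -ep.
have eP : (y + p %/ L t) %/ r t = y %/ r t + E.
  by rewrite eD divnDMl.
rewrite eP in e2.
rewrite ep leq_mul2r; apply/orP; right.
set P := y %/ r t in e2.
set R := r t.+1 in e2 *.
have hR : n.+1 < R := r_gt _.
move: e2; rewrite /ct -/R => e2.
clearbody P R E.
case: (leqP (R - n) E) => // hE. exfalso.
case: (leqP n (P %% R)) => hK.
  have e4 := coll_ge hK e2.
  have : (P + E == P + 0 %[mod R]) by rewrite addn0 -e4.
  rewrite eqn_modDl mod0n => /eqP hm.
  have : R <= E by apply: dvdn_leq => //; rewrite /dvdn hm.
  move: hE; clear; lia.
have e4 : coll (P %% R) = 0 by rewrite /coll hK.
rewrite e4 in e2.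
have e5 := coll0 (esym e2).
rewrite -modnDml modn_small in e5; last first.
  have := ltn_mod P R. move: hK hE hR; clear; lia.
have : n <= E by apply: dvdn_leq.
move: e5 hE; clear; lia.
Qed.
Lemma exists_level l t0 : (n + 2) * L t0 <= l ->
  exists t, [/\ t0 <= t, (n + 2) * L t <= l & l < (n + 2) * L t.+1].
Proof.
move=> h0.
suff : forall k t0, (n + 2) * L t0 <= l -> l < (n + 2) * L (t0 + k) ->
  exists t, [/\ t0 <= t, (n + 2) * L t <= l & l < (n + 2) * L t.+1].
  apply => //. have := L_ge (t0 + l) => h.
  apply: (@leq_trans (L (t0 + l))); first lia. by apply: leq_pmull; rewrite addn2.
elim=> [|k IH] t1 h1 h2; first by rewrite addn0 in h2; lia.
case: (ltnP l ((n + 2) * L t1.+1)) => h3; first by exists t1.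
have [t [? ? ?]] := IH t1.+1 h3 ltac:(by rewrite addSnnS).
by exists t; split => //; lia.
Qed.

Lemma Qlem T : exists M, forall x p m, M <= m -> 0 < p -> p < m ->
  rep x (p * n) ((m - p) * n) -> (m - p) * T.+1 < p.
Proof.
set T' := 3 * T.+1.
set A := (n + 2) * L T'.
exists (A * T.+2) => x p m hM hp hpm hr.
case: (ltnP ((m - p) * n) A) => hA.
  have h1 : m - p < A by nia.
  nia.
have [t [ht h1 h2]] := exists_level hA.
have hm := Main hr h1 ltac:(nia) (dvdn_mull _ (dvdnn n)).
have hrr : (n + 2) * T.+1 <= r t.+1 - n.
  have : r T'.+1 <= r t.+1 by apply: r_mono; lia.
  rewrite /r /T'. nia.
have h3 : (m - p) * n * (r t.+1 - n) < (n + 2) * (p * n).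
  have h4 : (m - p) * n * (r t.+1 - n) < (n + 2) * L t.+1 * (r t.+1 - n).
    by rewrite ltn_mul2r h2 andbT; have := r_gt t.+1; lia.
  apply: (leq_trans h4). rewrite -mulnA leq_mul2l mulnC hm orbT. done.
nia.
Qed.
Lemma copies t k j : k < n -> j < L t -> V (k * L t + j) = V j.
Proof.
move=> hk hj.
have e : letter t (0 * r t + k) = letter t (0 * r t + 0).
  rewrite !letter_step ?n_gt0 //; try (have := r_gt t; lia).
  by rewrite /coll hk ?n_gt0.
have := congr1 (fun s => nth false s j) (blk_letter e).
rewrite /= !nth_mkseq // !mul0n !add0n mul0n add0n.
Qed.

Lemma copiesP t i : i < n * L t -> V i = V (i %% L t).
Proof.
move=> hi. have hL := L_pos t.
rewrite {1}(divn_eq i (L t)) copies ?ltn_mod //.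
by rewrite ltn_divLR // mulnC.
Qed.

Definition s0 q := find (fun s => V (q * n + s) != V (q * n)) (iota 0 n).
Definition wl q := (if V (q * n) then n else 0) + (s0 q).-1.
Definition himg (l : nat) : seq bool :=
  nseq (l %% n).+1 (n <= l) ++ nseq (n - (l %% n).+1) (~~ (n <= l)).

Lemma s0_le q : s0 q <= n.
Proof. by rewrite /s0 (leq_trans (find_size _ _)) // size_iota. Qed.

Lemma s0_pos q : 0 < s0 q.
Proof. by rewrite /s0; case: n n_gt0 => // n' _ /=; rewrite addn0 eqxx. Qed.

Lemma wl_lt q : wl q < 2 * n.
Proof. have := s0_le q; have := s0_pos q; rewrite /wl; case: (V _); lia. Qed.

Lemma wl_mod q : wl q %% n = (s0 q).-1.
Proof.
have := s0_le q; have := s0_pos q => h1 h2.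
rewrite /wl; case: (V _).
  by rewrite modnDl modn_small //; lia.
by rewrite add0n modn_small //; lia.
Qed.

Lemma wl_b q : (n <= wl q) = V (q * n).
Proof. have := s0_le q; have := s0_pos q; rewrite /wl; case: (V _); lia. Qed.

Lemma blockV q s : s < n -> V (q * n + s) = (if s < s0 q then V (q * n) else ~~ V (q * n)).
Proof.
move=> hs.
case: ifP => h.
  have := before_find 0 (a := fun s => V (q * n + s) != V (q * n)) (s := iota 0 n) h.
  rewrite nth_iota ?add0n; last by have := s0_le q; lia.
  by move/negbFE/eqP.
have hs0 : s0 q < n by have := s0_le q; lia.
have hf : V (q * n + s0 q) != V (q * n).
  have := nth_find 0 (a := fun s => V (q * n + s) != V (q * n)) (s := iota 0 n).
  rewrite -/(s0 q) has_find size_iota hs0 nth_iota // add0n. by apply.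
have hprev : V (q * n + (s0 q).-1) = V (q * n).
  have hp := s0_pos q.
  have := before_find 0 (a := fun s => V (q * n + s) != V (q * n)) (s := iota 0 n) (i := (s0 q).-1).
  rewrite -/(s0 q) nth_iota ?add0n; last lia.
  by move=> /(_ ltac:(lia)) /negbFE /eqP.
have hc : V (q * n + (s0 q).-1) != V (q * n + (s0 q).-1).+1.
  rewrite hprev (_ : (q * n + (s0 q).-1).+1 = q * n + s0 q); last by have := s0_pos q; lia.
  by rewrite eq_sym.
have := runs hc (j := s - s0 q) ltac:(lia).
rewrite (_ : (q * n + (s0 q).-1).+1 = q * n + s0 q); last by have := s0_pos q; lia.
rewrite (_ : q * n + s0 q + (s - s0 q) = q * n + s); last lia.
move=> ->. by move: hf; case: (V _); case: (V _).
Qed.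

Lemma decode q : himg (wl q) = mkseq (fun s => V (q * n + s)) n.
Proof.
apply: (@eq_from_nth _ false).
  by rewrite size_cat !size_nseq size_mkseq wl_mod; have := s0_le q; have := s0_pos q; lia.
move=> s; rewrite size_cat !size_nseq wl_mod => hs.
have hs' : s < n by move: hs; have := s0_le q; have := s0_pos q; lia.
rewrite nth_mkseq // blockV // nth_cat size_nseq wl_b.
have := s0_pos q => hp.
rewrite wl_mod (_ : (s0 q).-1.+1 = s0 q); last lia.
case: ifP => h; rewrite nth_nseq ?h //.
by rewrite ifT //; lia.
Qed.
Lemma size_himg l : size (himg l) = n.
Proof. rewrite size_cat !size_nseq. have := ltn_pmod l n_gt0. lia. Qed.

Lemma himg_inj l l' : l < 2 * n -> l' < 2 * n -> himg l = himg l' -> l = l'.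
Proof.
move=> hl hl' e.
have hb : (n <= l) = (n <= l').
  by have := congr1 (fun s => nth true s 0) e.
have hc : forall k, count (pred1 (n <= k)) (himg k) = (k %% n).+1.
  move=> k. rewrite count_cat !count_nseq /= eqxx mul1n.
  by case: (n <= k); rewrite /= mul0n addn0.
have hm : l %% n = l' %% n.
  have := hc l; rewrite e hb hc. by case.
rewrite (divn_eq l n) (divn_eq l' n) hm.
congr (_ * _ + _).
have h1 : l %/ n = (n <= l).
  case: (leqP n l) => h /=.
    apply/eqP; rewrite eqn_leq; apply/andP; split.
      by rewrite -ltnS ltn_divLR //; lia.
    by rewrite divn_gt0.
  by rewrite divn_small.
have h2 : l' %/ n = (n <= l').
  case: (leqP n l') => h /=.
    apply/eqP; rewrite eqn_leq; apply/andP; split.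
      by rewrite -ltnS ltn_divLR //; lia.
    by rewrite divn_gt0.
  by rewrite divn_small.
by rewrite h1 h2 hb.
Qed.

Lemma rep_of_w i p m : (forall j, j < m - p -> wl (i + j) = wl (i + j + p)) ->
  rep (i * n) (p * n) ((m - p) * n).
Proof.
move=> h t ht.
have ht' : t %/ n < m - p by rewrite ltn_divLR.
have hm := ltn_pmod t n_gt0.
have e1 : i * n + t = (i + t %/ n) * n + t %% n.
  by rewrite {1}(divn_eq t n) mulnDl addnA.
have e2 : i * n + p * n + t = (i + t %/ n + p) * n + t %% n.
  by rewrite {1}(divn_eq t n) !mulnDl; lia.
have d1 := congr1 (fun s => nth false s (t %% n)) (decode (i + t %/ n)).
have d2 := congr1 (fun s => nth false s (t %% n)) (decode (i + t %/ n + p)).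
rewrite /= nth_mkseq // in d1. rewrite /= nth_mkseq // in d2.
by rewrite e1 e2 -d1 -d2 h.
Qed.
End Constr.
End Comb.

Import Order.TTheory GRing.Theory Num.Theory.
Local Open Scope classical_set_scope.
Local Open Scope ring_scope.

Section Gen.
Local Open Scope ereal_scope.

Lemma limn_esup_inf (u : (\bar R)^nat) : limn_esup u = ereal_inf (range (esups u)).
Proof. by rewrite limn_esup_lim; apply: cvg_lim => //; exact: cvg_esups_inf. Qed.

Lemma limsup_le (u : (\bar R)^nat) (x : \bar R) :
  (exists N, forall m, (N <= m)%N -> u m <= x) -> limn_esup u <= x.
Proof.
case=> N hN. rewrite limn_esup_inf.
apply: (@le_trans _ _ (esups u N)); first by apply: ereal_inf_lbound; exists N.
apply: ge_ereal_sup => _ [m /= hm <-]. exact: hN.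
Qed.

Lemma limsup_ge (u : (\bar R)^nat) (x : \bar R) :
  (forall N, exists m, (N <= m)%N /\ x <= u m) -> x <= limn_esup u.
Proof.
move=> h. rewrite limn_esup_inf.
apply: le_ereal_inf_tmp => _ [N _ <-].
have [m [hm hx]] := h N.
apply: (le_trans hx). apply: ereal_sup_ubound. by exists m.
Qed.
End Gen.

Section ExpLemmas.
Variable A : eqType.

Lemma flatten_nseqS (v : seq A) k : flatten (nseq k.+1 v) = v ++ flatten (nseq k v).
Proof. by []. Qed.

Lemma size_flatten_nseq (v : seq A) k : size (flatten (nseq k v)) = (k * size v)%N.
Proof. elim: k => [|k IH] //; by rewrite flatten_nseqS size_cat IH mulSn. Qed.

Lemma nth_flatten_nseq (x0 : A) v k j : (0 < size v)%N -> (j < k * size v)%N ->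
  nth x0 (flatten (nseq k v)) j = nth x0 v (j %% size v).
Proof.
move=> hv; elim: k j => [|k IH] j //.
rewrite flatten_nseqS nth_cat mulSn => hj.
case: ltnP => h; first by rewrite modn_small.
rewrite IH; last by rewrite -(ltn_add2l (size v)) subnKC.
by rewrite -{2}(subnK h) modnDr.
Qed.

Lemma size_fpow (v : seq A) p : (0 < size v)%N -> size (fpow v p) = p.
Proof.
move=> hv; rewrite /fpow size_takel // size_flatten_nseq. by rewrite leq_pmulr.
Qed.

Lemma nth_fpow (x0 : A) v p j : (0 < size v)%N -> (j < p)%N ->
  nth x0 (fpow v p) j = nth x0 v (j %% size v).
Proof.
move=> hv hj; rewrite /fpow nth_take // nth_flatten_nseq //.
by apply: (leq_trans hj); rewrite leq_pmulr.
Qed.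

Lemma fpow_self (u : seq A) : fpow u (size u) = u.
Proof.
case: u => [|a u] //. rewrite /fpow flatten_nseqS take_size_cat //.
Qed.

Local Open Scope ereal_scope.

Lemma Exp_ge (u v : seq A) p : (0 < size v)%N -> u = fpow v p ->
  ((p%:R / (size v)%:R : R)%:E <= Exp u).
Proof.
move=> hv eu. apply: ereal_sup_ubound. exists (p%:R / (size v)%:R)%R => //.
exists v, p; split => //. by rewrite -lt0n.
Qed.

Lemma Exp_ge1 (u : seq A) : (0 < size u)%N -> (1%:E <= Exp u).
Proof.
move=> hu. have := @Exp_ge u u (size u) hu (esym (fpow_self u)).
rewrite divff // pnatr_eq0 -lt0n. done.
Qed.

Lemma Exp_le (u : seq A) (x : R) :
  (forall v p, (0 < size v)%N -> u = fpow v p -> (p%:R / (size v)%:R <= x)%R) ->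
  Exp u <= x%:E.
Proof.
move=> h. apply: ge_ereal_sup => _ [r [v [p [hv [-> eu]]]] <-].
rewrite lee_fin. apply: h => //. by rewrite lt0n.
Qed.
End ExpLemmas.

Lemma factor_nth (A : Type) x0 (w : iword A) i m j : (j < m)%N ->
  nth x0 (factor_at w i m) j = w (i + j)%N.
Proof. by move=> h; rewrite /factor_at nth_mkseq. Qed.

Lemma size_factor (A : Type) (w : iword A) i m : size (factor_at w i m) = m.
Proof. by rewrite size_mkseq. Qed.

Lemma ratio_le (a b c d : nat) : (0 < b)%N -> (0 < d)%N -> (a * d <= c * b)%N ->
  (a%:R / b%:R <= c%:R / d%:R :> R).
Proof.
move=> hb hd h.
rewrite ler_pdivrMr ?ltr0n // mulrAC ler_pdivlMr ?ltr0n // -!natrM ler_nat.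
exact: h.
Qed.

Lemma ACE_ge1 (A : eqType) (w : iword A) : (1%:E <= ACE w)%E.
Proof.
apply: limsup_ge => N. exists N.+1; split => //.
apply: (le_trans (@Exp_ge1 _ (factor_at w 0 N.+1) _)); first by rewrite size_factor.
apply: ereal_sup_ubound. exists (factor_at w 0 N.+1) => //. by exists 0%N.
Qed.

Section Main.
Variable n : nat.
Hypothesis hn : (0 < n)%N.

Definition wI : iword 'I_(2 * n) := fun q => Ordinal (Comb.wl_lt hn q).

Lemma part1_bound T : exists M, forall m, (M <= m)%N -> forall u, Fact m wI u ->
  (Exp u <= ((T.+2)%:R / (T.+1)%:R : R)%:E)%E.
Proof.
have [M hM] := Comb.Qlem hn T.
exists M => m hm _ [i ->].
apply: Exp_le => v p hv eu.
have sp : p = m by rewrite -(@size_fpow _ v p hv) -eu size_factor.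
subst p.
set q := size v in hv eu *.
case: (leqP m q) => hmq.
  apply: ratio_le => //. by rewrite mulnC leq_mul.
have hrep : forall j, (j < m - q)%N -> Comb.wl n (i + j) = Comb.wl n (i + j + q).
  move=> j hj.
  have e1 := congr1 (fun s => nth (wI 0) s j) eu.
  have e2 := congr1 (fun s => nth (wI 0) s (j + q)) eu.
  rewrite /= factor_nth in e1; last lia.
  rewrite /= factor_nth in e2; last lia.
  rewrite nth_fpow in e1; last lia; last done.
  rewrite nth_fpow in e2; last lia; last done.
  rewrite modnDr -e1 addnA in e2.
  by have := congr1 val e2.
have := hM (i * n)%N q m hm ltac:(lia) hmq (Comb.rep_of_w hn hrep).
move=> h. apply: ratio_le => //. nia.
Qed.

Lemma ACE_wI : ACE wI = 1%:E.
Proof.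
apply/eqP; rewrite eq_le ACE_ge1 andbT.
apply/lee_addgt0Pr => e e0.
set T := Num.truncn (e^-1).
have hT : e^-1 < T.+1%:R := truncnS_gt _.
have [M hM] := part1_bound T.
apply: (@le_trans _ _ ((T.+2)%:R / (T.+1)%:R : R)%:E).
  rewrite /ACE; apply: limsup_le; exists M => m hm.
  apply: ge_ereal_sup => _ [u hu <-]. exact: (hM m hm u hu).
rewrite lee_fin -natr1 mulrDl divff ?pnatr_eq0 // mul1r lerD2l.
rewrite -[e]invrK lef_pV2 ?ltW //; rewrite ?posrE ?invr_gt0 ?ltr0n //.
Qed.

Lemma morph_inj (S G : Type) (h : S -> seq G) k : (0 < k)%N ->
  (forall x, size (h x) = k) -> injective h -> injective (morph h).
Proof.
move=> hk hs hi s; elim: s => [|x s IH] [|x' s'] //=.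
- rewrite /morph /= => e; have := congr1 size e; rewrite /= size_cat hs; lia.
- rewrite /morph /= => e; have := congr1 size e; rewrite /= size_cat hs; lia.
rewrite /morph /= => e.
have e1 : h x = h x'.
  by have := congr1 (take k) e; rewrite !take_size_cat ?hs.
have e2 : morph h s = morph h s'.
  by have := congr1 (drop k) e; rewrite !drop_size_cat ?hs.
by rewrite (hi _ _ e1) (IH _ e2).
Qed.

Lemma size_morph (S G : Type) (h : S -> seq G) k s :
  (forall x, size (h x) = k) -> size (morph h s) = (k * size s)%N.
Proof.
move=> hs; elim: s => [|x s IH] /=; first by rewrite muln0.
by rewrite /morph /= size_cat hs -/(morph h s) IH mulnS.
Qed.

Lemma nth_morph (S G : Type) (h : S -> seq G) k x0 y0 s j : (0 < k)%N ->
  (forall x, size (h x) = k) -> (j < k * size s)%N ->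
  nth x0 (morph h s) j = nth x0 (h (nth y0 s (j %/ k))) (j %% k).
Proof.
move=> hk hs; elim: s j => [|x s IH] j /=; first by rewrite muln0.
rewrite /morph /= nth_cat hs mulnS => hj.
case: ltnP => h1; first by rewrite divn_small // modn_small.
rewrite -/(morph h s) IH; last lia.
have e : j = (1 * k + (j - k))%N by lia.
have d1 : (j %/ k = ((j - k) %/ k).+1)%N by rewrite {1}e divnMDl // add1n.
have m1 : (j %% k = (j - k) %% k)%N by rewrite {1}e modnMDl.
by rewrite d1 m1.
Qed.

Section Part2.
Variable G : finType.
Variables g0 g1 : G.
Hypothesis hg : g0 != g1.

Definition gam (b : bool) := if b then g1 else g0.
Lemma gam_inj : injective gam.
Proof. by move=> [] [] //= e; move: hg; rewrite e eqxx. Qed.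

Definition hh (l : 'I_(2 * n)) : seq G := map gam (Comb.himg n (val l)).
Definition uu : iword G := fun i => gam (Comb.V n i).

Lemma size_hh l : size (hh l) = n.
Proof. by rewrite size_map Comb.size_himg. Qed.

Lemma hh_inj : inj_morph hh.
Proof.
rewrite /inj_morph; apply: (@morph_inj _ _ hh n hn size_hh) => l l' /(inj_map gam_inj) e.
by apply: val_inj; apply: (Comb.himg_inj hn (ltn_ord l) (ltn_ord l') e).
Qed.

Lemma hh_image : morph_image hh wI uu.
Proof.
move=> K /=.
apply: (@eq_from_nth _ g0).
  by rewrite size_mkseq.
rewrite size_mkseq => j hj.
rewrite nth_mkseq //.
have hsz : size (morph hh (mkseq wI K)) = (n * K)%N.
  by rewrite (@size_morph _ _ hh n _ size_hh) size_mkseq.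
rewrite hsz in hj.
rewrite (@nth_morph _ _ hh n g0 (wI 0) _ _ hn size_hh) ?size_mkseq //.
rewrite nth_mkseq; last by rewrite ltn_divLR // mulnC.
rewrite /hh (nth_map false); last first.   by rewrite (Comb.size_himg hn) ltn_pmod.
rewrite (Comb.decode hn) nth_mkseq ?ltn_mod //.
by rewrite /uu -divn_eq.
Qed.

Lemma ACE_uu : ((n%:R : R)%:E <= ACE uu)%E.
Proof.
apply: limsup_ge => N.
set LN := Comb.L n N.
have hL : (0 < LN)%N := Comb.L_pos hn N.
exists (n * LN)%N; split.
  have := Comb.L_ge hn N. rewrite -/LN. nia.
have e : factor_at uu 0 (n * LN) = fpow (factor_at uu 0 LN) (n * LN).
  apply: (@eq_from_nth _ g0).
    by rewrite size_factor size_fpow // size_factor.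
  rewrite size_factor => j hj.
  rewrite nth_fpow ?size_factor // !factor_nth ?ltn_mod //.
  by rewrite /uu (Comb.copiesP hn hj).
apply: (le_trans _ (ereal_sup_ubound _)); last first.
  by exists (factor_at uu 0 (n * LN)) => //; exists 0%N.
have hv : (0 < size (factor_at uu 0 LN))%N by rewrite size_factor.
apply: (le_trans _ (@Exp_ge _ _ _ _ hv e)).
by rewrite lee_fin size_factor natrM mulfK // pnatr_eq0 -lt0n.
Qed.
End Part2.
End Main.

Theorem theorem24 :
  forall n : nat, (1 <= n)%N ->
  exists w : iword 'I_(2 * n),
    ACE w = (1 : R)%:E /\
    (forall Gamma : finType, (2 <= #|Gamma|)%N ->
       ((n%:R : R)%:E <= @ACE_I 'I_(2 * n) Gamma w)%E).
Proof.
move=> n hn. exists (@wI n hn); split; first exact: ACE_wI.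
move=> G hG. have /card_gt1P [g0 [g1 [_ _ hg]]] := hG.
apply: (le_trans (@ACE_uu n hn G g0 g1 hg)).
apply: ereal_sup_ubound. exists (uu n G g0 g1) => //.
exists (hh n G g0 g1); split; first exact: (@hh_inj n hn G g0 g1 hg).
exact: hh_image.
Qed.
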